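(* Let $X,Y$ be mm-spaces and let $\varphi:I\to X$, $\psi:I\to Y$ be parameters of $X$ and $Y$. Then \[ \square(\varphi^*d_X,\psi^*d_Y)=\operatorname{dis}\big((\varphi,\psi)_*\mathcal L^1\big). \]
   Context: An mm-space is a complete separable metric space with a Borel probability measure. $I=[0,1)$ with Lebesgue measure $\mathcal L^1$; a parameter of $X$ is a Borel $\varphi:I\to X$ with $\varphi_*\mathcal L^1=m_X$; $\varphi^*d_X(s,t):=d_X(\varphi(s),\varphi(t))$. For pseudo-metrics $\rho_1,\rho_2$ on $I$, $\square(\rho_1,\rho_2)$ is the infimum of $\varepsilon\ge0$ such that some Borel $I_0\subset I$ has $\mathcal L^1(I_0)\ge1-\varepsilon$ and $|\rho_1(s,t)-\rho_2(s,t)|\le\varepsilon$ for all $s,t\in I_0$. For nonempty $S\subset X\times Y$, $\operatorname{dis}S:=\sup\{|d_X(x,x')-d_Y(y,y')|:(x,y),(x',y')\in S\}$, $\operatorname{dis}\emptyset:=\infty$; for a Borel probability measure $\pi$ on $X\times Y$, $\operatorname{dis}\pi:=\inf_S\max\{\operatorname{dis}S,1-\pi(S)\}$ over closed $S\subset X\times Y$. *)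

(* Defs.v *)
From HB Require Import structures.
From mathcomp Require Import all_boot all_order all_algebra.
From mathcomp Require Import all_classical all_reals all_analysis.
Set Implicit Arguments. Unset Strict Implicit. Unset Printing Implicit Defensive.
Import Order.TTheory GRing.Theory Num.Theory.
Local Open Scope classical_set_scope.
Local Open Scope ring_scope.

Section Defs.
Variable R : realType.

Definition is_metric (T : Type) (d : T -> T -> R) : Prop :=
  (forall x y, 0 <= d x y) /\ (forall x y, d x y = 0 <-> x = y) /\
  (forall x y, d x y = d y x) /\ (forall x y z, d x z <= d x y + d y z).

Definition dcomplete (T : Type) (d : T -> T -> R) : Prop :=
  forall u : nat -> T,
    (forall e, 0 < e -> exists N, forall m n, (N <= m)%N -> (N <= n)%N -> d (u m) (u n) < e) ->
    exists l, forall e, 0 < e -> exists N, forall n, (N <= n)%N -> d (u n) l < e.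

Definition dseparable (T : Type) (d : T -> T -> R) : Prop :=
  exists D : set T, countable D /\
    forall x e, 0 < e -> exists2 y, D y & d x y < e.

Definition dopen (T : Type) (d : T -> T -> R) (A : set T) : Prop :=
  forall x, A x -> exists2 r, 0 < r & forall y, d x y < r -> A y.

Definition mm_space (dsp : measure_display) (X : measurableType dsp)
  (dX : X -> X -> R) (mX : probability X R) : Prop :=
  [/\ is_metric dX, dcomplete dX, dseparable dX &
      (@measurable dsp X) = <<s dopen dX>>].

(* the domain I = [0,1) with Lebesgue measure; maps I -> X are modelled as
   maps R -> X whose values outside [0,1) are irrelevant *)
Definition Iset : set R := `[0, 1[%classic.

Definition LebI (A : set R) : \bar R := (@lebesgue_measure R) (Iset `&` A).

Definition is_parameter (dsp : measure_display) (X : measurableType dsp)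
  (mX : probability X R) (phi : R -> X) : Prop :=
  measurable_fun Iset phi /\
  forall A : set X, measurable A -> mX A = LebI (phi @^-1` A).

Definition pullback (X : Type) (dX : X -> X -> R) (phi : R -> X) : R -> R -> R :=
  fun s t => dX (phi s) (phi t).

Definition box (rho1 rho2 : R -> R -> R) : \bar R :=
  ereal_inf [set e%:E | e in [set e : R | 0 <= e /\
     exists I0 : set R, [/\ measurable I0, I0 `<=` Iset,
        ((1 - e)%:E <= (@lebesgue_measure R) I0)%E &
        forall s t, I0 s -> I0 t -> `|rho1 s t - rho2 s t| <= e]]].

Definition closedXY (X Y : Type) (dX : X -> X -> R) (dY : Y -> Y -> R)
  (S : set (X * Y)) : Prop :=
  forall x y, ~ S (x, y) -> exists2 r, 0 < r &
    forall x' y', dX x x' < r -> dY y y' < r -> ~ S (x', y').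

Definition dis_set (X Y : Type) (dX : X -> X -> R) (dY : Y -> Y -> R)
  (S : set (X * Y)) : \bar R :=
  if `[< S = set0 >] then +oo%E
  else ereal_sup [set `|dX p.1.1 p.2.1 - dY p.1.2 p.2.2|%:E
                   | p in [set pq : (X * Y) * (X * Y) | S pq.1 /\ S pq.2]].

Definition dis_meas (X Y : Type) (dX : X -> X -> R) (dY : Y -> Y -> R)
  (pi : set (X * Y) -> \bar R) : \bar R :=
  ereal_inf [set maxe (dis_set dX dY S) (1%:E - pi S)%E
             | S in [set S | closedXY dX dY S]].

Definition push_pair (X Y : Type) (phi : R -> X) (psi : R -> Y)
  (S : set (X * Y)) : \bar R := LebI ((fun s => (phi s, psi s)) @^-1` S).

End Defs.

(* Main.v *)
Require Import Defs.
From HB Require Import structures.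
From mathcomp Require Import all_boot all_order all_algebra.
From mathcomp Require Import all_classical all_reals all_analysis.
From mathcomp Require Import lra.
Import Order.TTheory GRing.Theory Num.Theory.
Local Open Scope classical_set_scope.
Local Open Scope ring_scope.

Set Implicit Arguments. Unset Strict Implicit.
Section H.
Variable R : realType.

Lemma ball_open (T : Type) (d : T -> T -> R) (a : T) (r : R) :
  is_metric d -> dopen d [set y | d a y < r].
Proof.
move=> [d0 [dE [dS dT]]] x /= hx; exists (r - d a x); first by rewrite subr_gt0.
move=> y hy; have := dT a x y; lra.
Qed.

Lemma meas_ball (dsp : measure_display) (X : measurableType dsp)
  (dX : X -> X -> R) (mX : probability X R) (a : X) (r : R) :
  mm_space dX mX -> measurable [set y | dX a y < r].
Proof.
case=> hm _ _ E; rewrite E; apply: sub_sigma_algebra; exact: ball_open.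
Qed.

Lemma dense_seq (dsp : measure_display) (X : measurableType dsp)
  (dX : X -> X -> R) (mX : probability X R) :
  mm_space dX mX -> exists g : nat -> X,
    forall x e, 0 < e -> exists i, dX x (g i) < e.
Proof.
case=> _ _ [D [cD dD]] _.
have /pcard_surjP [g gs] := cD.
exists g => x e e0; have [y Dy hy] := dD x e e0.
have [i _ giy] := gs y Dy; by exists i; rewrite giy.
Qed.

Lemma meas_pre (dspX : measure_display) (X : measurableType dspX)
  (dX : X -> X -> R) (mX : probability X R)
  (dspY : measure_display) (Y : measurableType dspY)
  (dY : Y -> Y -> R) (mY : probability Y R)
  (hX : mm_space dX mX) (hY : mm_space dY mY)
  (phi : R -> X) (psi : R -> Y)
  (hphi : is_parameter mX phi) (hpsi : is_parameter mY psi)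
  (S : set (X * Y)) :
  closedXY dX dY S -> measurable ((@Iset R) `&` (fun s => (phi s, psi s)) @^-1` S).
Proof.
move=> cS.
have [gX hgX] := dense_seq hX; have [gY hgY] := dense_seq hY.
have mI : measurable ((@Iset R)) by exact: measurable_itv.
have [[_ [_ [dXs dXt]]] _ _ _] := hX.
have [[_ [_ [dYs dYt]]] _ _ _] := hY.
pose r (k : nat * nat * nat) : R := (k.1.1.+1%:R)^-1.
pose cond (k : nat * nat * nat) := forall x' y', dX (gX k.1.2) x' < r k ->
   dY (gY k.2) y' < r k -> ~ S (x', y').
pose F k := [set s | cond k /\ (@Iset R) s /\ dX (gX k.1.2) (phi s) < r k /\
   dY (gY k.2) (psi s) < r k].
have -> : (@Iset R) `&` (fun s => (phi s, psi s)) @^-1` S = (@Iset R) `\` \bigcup_k F k.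
  apply/seteqP; split => s.
    move=> [Is Ps]; split => //; move=> [k _ [c [_ [h1 h2]]]].
    exact: (c _ _ h1 h2 Ps).
  move=> [Is nU]; split => //=.
  apply: contrapT => nP.
  have [rr rr0 hr] := cS _ _ nP.
  have [n hn] := ltr_add_invr (y := 0) (x := rr / 2) ltac:(lra).
  rewrite add0r in hn.
  have [i hi] := hgX (phi s) _ (ltac:(rewrite invr_gt0 ltr0n //) : 0 < (n.+1%:R)^-1 :> R).
  have [j hj] := hgY (psi s) _ (ltac:(rewrite invr_gt0 ltr0n //) : 0 < (n.+1%:R)^-1 :> R).
  apply: nU; exists (n, i, j) => //; rewrite /F /r /=; split; last first.
    by split => //; rewrite dXs dYs.
  move=> x' y' /= h1 h2; rewrite /r /= in h1 h2; apply: hr.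
    have HH := dXt (phi s) (gX i) x'; apply: (le_lt_trans HH); apply: (lt_trans (ltrD hi h1)); clear -hn; move: hn; move: (n.+1%:R^-1 : R) => t; move: (rr : R) => rr1; move=> *; lra.
  have HH := dYt (psi s) (gY j) y'; apply: (le_lt_trans HH); apply: (lt_trans (ltrD hj h2)); clear -hn; move: hn; move: (n.+1%:R^-1 : R) => t; move: (rr : R) => rr1; move=> *; lra.
apply: measurableD => //; apply: countable_bigcupT_measurable => // k.
have [c|nc] := pselect (cond k); last first.
  suff -> : F k = set0 by exact: measurable0.
  by apply/seteqP; split => s // [].
suff -> : F k = ((@Iset R) `&` phi @^-1` [set y | dX (gX k.1.2) y < r k]) `&`
                ((@Iset R) `&` psi @^-1` [set y | dY (gY k.2) y < r k]).
  apply: measurableI.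
    by apply: (hphi.1 mI); exact: meas_ball hX.
  by apply: (hpsi.1 mI); exact: meas_ball hY.
apply/seteqP; split => s /=.
  by move=> [_ [Is [h1 h2]]].
by move=> [[Is h1] [_ h2]].
Qed.

Lemma dis_ub (X Y : Type) (dX : X -> X -> R) (dY : Y -> Y -> R) (S : set (X * Y))
  x y x' y' : S (x, y) -> S (x', y') ->
  ((`|dX x x' - dY y y'|)%:E <= dis_set dX dY S)%E.
Proof.
move=> h h'; rewrite /dis_set; case: asboolP => [S0|_].
  by move: h; rewrite S0.
by apply: ereal_sup_ubound; exists ((x, y), (x', y')).
Qed.

Lemma dis_ge0 (X Y : Type) (dX : X -> X -> R) (dY : Y -> Y -> R) (S : set (X * Y)) :
  is_metric dX -> is_metric dY -> (0 <= dis_set dX dY S)%E.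
Proof.
move=> [_ [dXE _]] [_ [dYE _]].
have [[[x y] Sp]|nS] := pselect (exists p, S p).
  have HH := dis_ub dX dY Sp Sp; apply: le_trans HH.
  by rewrite (dXE x x).2 // (dYE y y).2 // subrr normr0.
have -> : S = set0.
  by apply/seteqP; split => // p Sp; apply: nS; exists p.
rewrite /dis_set; case: asboolP => // h; exfalso; exact: h.
Qed.

Lemma dis_le (X Y : Type) (dX : X -> X -> R) (dY : Y -> Y -> R) (S : set (X * Y)) e :
  (exists p, S p) ->
  (forall x y x' y', S (x, y) -> S (x', y') -> `|dX x x' - dY y y'| <= e) ->
  (dis_set dX dY S <= e%:E)%E.
Proof.
move=> [p Sp] h; rewrite /dis_set; case: asboolP => [S0|_].
  by move: Sp; rewrite S0.
apply/ereal_supP => _ [[[x y] [x' y']] /= [h1 h2] <-].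
by rewrite lee_fin; apply: h.
Qed.

Lemma sub_le (x : \bar R) (e : R) : (0 <= x)%E -> ((1 - e)%:E <= x)%E ->
  (1%:E - x <= e%:E)%E.
Proof.
case: x => [r| |] //=; last by move=> _ _; rewrite leNye.
move=> _; rewrite lee_fin => h; have -> : (1 + (- r)%:E = (1 - r)%:E)%E by []. by rewrite lee_fin; lra.
Qed.

Lemma le_sub (x : \bar R) (m : R) : (0 <= x)%E -> (1%:E - x <= m%:E)%E ->
  ((1 - m)%:E <= x)%E.
Proof.
case: x => [r| |] //=; last by move=> _ _; rewrite leey.
by move=> _; have -> : (1 + (- r)%:E = (1 - r)%:E)%E by []; rewrite !lee_fin => h; lra.
Qed.
End H.

Unset Implicit Arguments. Set Strict Implicit.

Theorem lemma4p3 (R : realType)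
  (dspX : measure_display) (X : measurableType dspX)
  (dX : X -> X -> R) (mX : probability X R)
  (dspY : measure_display) (Y : measurableType dspY)
  (dY : Y -> Y -> R) (mY : probability Y R)
  (hX : mm_space dX mX) (hY : mm_space dY mY)
  (phi : R -> X) (psi : R -> Y)
  (hphi : is_parameter mX phi) (hpsi : is_parameter mY psi) :
  box (pullback dX phi) (pullback dY psi) =
  dis_meas dX dY (push_pair phi psi).
Proof.
have [mtX _ _ _] := hX; have [mtY _ _ _] := hY.
have [dX0 [dXE [dXs dXt]]] := mtX; have [dY0 [dYE [dYs dYt]]] := mtY.
apply/le_anti/andP; split.
- apply/ereal_infP => _ [S cS <-].
  have mM := meas_pre hX hY hphi hpsi cS.
  have D0 := dis_ge0 S mtX mtY.
  have lm : (dis_set dX dY S <= maxe (dis_set dX dY S) (1%:E - push_pair phi psi S))%E.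
    by rewrite le_max lexx.
  have lp : (1%:E - push_pair phi psi S <= maxe (dis_set dX dY S) (1%:E - push_pair phi psi S))%E.
    by rewrite le_max lexx orbT.
  move: lm lp; case: (maxe _ _) => [m| |] lm lp; last first.
    by have := le_trans D0 lm.
    by rewrite leey.
  apply: ereal_inf_lbound; exists m => //.
  split; first by rewrite -lee_fin; apply: le_trans D0 lm.
  exists (@Iset R `&` (fun s => (phi s, psi s)) @^-1` S); split.
  + exact: mM.
  + by move=> s [].
  + by apply: le_sub; [exact: measure_ge0 | exact: lp].
  + move=> s t [_ Ss] [_ St]; rewrite -lee_fin; apply: le_trans lm.
    exact: (dis_ub dX dY Ss St).
- apply/ereal_infP => _ [e [e0 [I0 [mI0 sI0 hI0 bnd]]] <-].
  suff [S [cS dS pS]] : exists S, [/\ closedXY dX dY S,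
      (dis_set dX dY S <= e%:E)%E & ((1 - e)%:E <= push_pair phi psi S)%E].
    have L1 : (dis_meas dX dY (push_pair phi psi) <=
       maxe (dis_set dX dY S) (1%:E - push_pair phi psi S))%E.
      by apply: ereal_inf_lbound; exists S.
    apply: le_trans L1 _.
    rewrite ge_max dS /=; apply: sub_le => //; exact: measure_ge0.
  have [[s0 Is0]|nI] := pselect (exists s, I0 s).
  + pose S := [set p : X * Y | forall r, 0 < r -> exists s, I0 s /\
                 dX p.1 (phi s) < r /\ dY p.2 (psi s) < r].
    have inS : forall s, I0 s -> S (phi s, psi s).
      move=> s Is r r0; exists s; split => //=.
      by rewrite (dXE _ _).2 // (dYE _ _).2.
    have cS : closedXY dX dY S.
      move=> x y nS.
      have [r [r0 hr]] : exists r, 0 < r /\ forall s, I0 s ->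
          ~ (dX x (phi s) < r /\ dY y (psi s) < r).
        apply: contrapT => h; apply: nS => r r0; apply: contrapT => h2.
        by apply: h; exists r; split => // s Is hs; apply: h2; exists s.
      exists (r / 2); first by rewrite divr_gt0.
      move=> x' y' h1 h2 Sxy'.
      have [s [Is [k1 k2]]] := Sxy' (r / 2) (ltac:(by rewrite divr_gt0)).
      apply: (hr s Is); split.
        have HH := dXt x x' (phi s); apply: (le_lt_trans HH); move: h1 k1 => /=.
        move: (dX x x') (dX x' (phi s)) (r : R) => a b c; move=> *; lra.
      have HH := dYt y y' (psi s); apply: (le_lt_trans HH); move: h2 k2 => /=.
      move: (dY y y') (dY y' (psi s)) (r : R) => a b c; move=> *; lra.
    exists S; split => //.
    + apply: dis_le; first by exists (phi s0, psi s0); exact: inS.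
      move=> x y x' y' Sxy Sxy'.
      apply/ler_addgt0Pr => d d0.
      have d4 : 0 < d / 4 by rewrite divr_gt0.
      have [s [Is [a1 a2]]] := Sxy (d / 4) d4.
      have [t [It [b1 b2]]] := Sxy' (d / 4) d4.
      move: (bnd s t Is It); rewrite /pullback /= in a1 a2 b1 b2 *.
      have t1 := dXt x (phi s) x'; have t2 := dXt (phi s) (phi t) x'.
      have t3 := dXt (phi s) x (phi t); have t4 := dXt x x' (phi t).
      have u1 := dYt y (psi s) y'; have u2 := dYt (psi s) (psi t) y'.
      have u3 := dYt (psi s) y (psi t); have u4 := dYt y y' (psi t).
      have s1 := dXs (phi t) x'; have s2 := dXs (phi s) x.
      have s3 := dYs (psi t) y'; have s4 := dYs (psi s) y.
      rewrite !ler_norml => /andP[c1 c2]; apply/andP; split.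
        move: (d : R) (e : R) a1 a2 b1 b2 t1 t2 t3 t4 u1 u2 u3 u4 s1 s2 s3 s4 c1 c2 => D E.
        move: (dX x x') (dX x (phi s)) (dX x' (phi t)) (dX (phi s) (phi t)) (dX (phi s) x) (dX (phi t) x').
        move: (dY y y') (dY y (psi s)) (dY y' (psi t)) (dY (psi s) (psi t)) (dY (psi s) y) (dY (psi t) y').
        move: (dX (phi s) x') (dX x (phi t)) (dY (psi s) y') (dY y (psi t)).
        move=> *; lra.
      move: (d : R) (e : R) a1 a2 b1 b2 t1 t2 t3 t4 u1 u2 u3 u4 s1 s2 s3 s4 c1 c2 => D E.
      move: (dX x x') (dX x (phi s)) (dX x' (phi t)) (dX (phi s) (phi t)) (dX (phi s) x) (dX (phi t) x').
      move: (dY y y') (dY y (psi s)) (dY y' (psi t)) (dY (psi s) (psi t)) (dY (psi s) y) (dY (psi t) y').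
      move: (dX (phi s) x') (dX x (phi t)) (dY (psi s) y') (dY y (psi t)).
      move=> *; lra.
    + apply: le_trans hI0 _; rewrite /push_pair /LebI.
      apply: le_measure; rewrite ?inE //.
        exact: (meas_pre hX hY hphi hpsi cS).
      by move=> s Is; split; [exact: sI0 | exact: inS].
  + pose S := [set p : X * Y | p = (phi 0, psi 0)].
    exists S; split.
    + move=> x y nS.
      have [ex|nx] := pselect (x = phi 0).
        have ny : y <> psi 0 by move=> ey; apply: nS; rewrite /S ex ey.
        exists (dY y (psi 0)).
          by rewrite lt_neqAle dY0 andbT eq_sym; apply/eqP => /dYE.
        by move=> x' y' _ h2 [_ ey']; rewrite ey' ltxx in h2.
      exists (dX x (phi 0)).
        by rewrite lt_neqAle dX0 andbT eq_sym; apply/eqP => /dXE.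
      by move=> x' y' h1 _ [ex' _]; rewrite ex' ltxx in h1.
    + apply: dis_le; first by exists (phi 0, psi 0).
      move=> x y x' y' [-> ->] [-> ->].
      by rewrite (dXE _ _).2 // (dYE _ _).2 // subrr normr0.
    + have I0e : I0 = set0.
        by apply/seteqP; split => // s Is; apply: nI; exists s.
      rewrite I0e measure0 in hI0; apply: le_trans hI0 _; exact: measure_ge0.
Qed.
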